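(* Let $\sigma(x)=\operatorname{sgn}(x)x^2$. Let $x_0,y_0$ be positive real numbers such that (i) $y_0$ is a rational number which is not a square in $\mathbb{Q}$; (ii) $x_0=a_0+b_0\sqrt{y_0}$ with $a_0\neq0$ and $|b_0|\geq1$ rational numbers; (iii) $y_0>x_0^2$. Then $(x_0,y_0)$ is $\sigma$-irrational. In particular $(-1+\sqrt2,2)$ is $\sigma$-irrational.
   Context: $h_\sigma(x,y)=(x+\sigma^{-1}(y),y)$, $v_\sigma(x,y)=(x,\sigma(x)+y)$. The $\sigma$-rational lines are the axes $Ox=\mathbb{R}\times\{0\}$, $Oy=\{0\}\times\mathbb{R}$, the sets $m(Ox)$ with $m$ in the monoid generated by $h_\sigma,v_\sigma$, and the sets $m(Oy)$ with $m$ in the monoid generated by $h_\sigma^{-1},v_\sigma^{-1}$; a point is $\sigma$-irrational if it lies on none of them. *)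

(* Defs.v *)
From Stdlib Require Import Reals QArith Qreals List.
Open Scope R_scope.

Definition sgn (x : R) : R :=
  if Rlt_dec 0 x then 1 else if Rlt_dec x 0 then -1 else 0.

Definition sigma (x : R) : R := sgn x * x ^ 2.

Definition sigma_inv (y : R) : R := sgn y * sqrt (Rabs y).

Definition h_sigma (p : R * R) : R * R := (fst p + sigma_inv (snd p), snd p).
Definition v_sigma (p : R * R) : R * R := (fst p, sigma (fst p) + snd p).
Definition h_sigma_inv (p : R * R) : R * R := (fst p - sigma_inv (snd p), snd p).
Definition v_sigma_inv (p : R * R) : R * R := (fst p, snd p - sigma (fst p)).

(* Elements of the monoid generated by two maps f, g: compositions of finite
   words (true = f, false = g); the empty word is the identity. *)
Fixpoint word_map (f g : R * R -> R * R) (w : list bool) : R * R -> R * R :=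
  match w with
  | nil => fun p => p
  | b :: w' => fun p => (if b then f else g) (word_map f g w' p)
  end.

Definition Ox (p : R * R) : Prop := snd p = 0.
Definition Oy (p : R * R) : Prop := fst p = 0.

Definition on_sigma_rational_line (p : R * R) : Prop :=
  Ox p \/ Oy p \/
  (exists w q, Ox q /\ p = word_map h_sigma v_sigma w q) \/
  (exists w q, Oy q /\ p = word_map h_sigma_inv v_sigma_inv w q).

Definition sigma_irrational (p : R * R) : Prop := ~ on_sigma_rational_line p.

Definition is_rational (x : R) : Prop := exists q : Q, x = Q2R q.

(* Main.v *)
Require Import Defs.
From Stdlib Require Import Reals QArith Qreals.
From Stdlib Require Import Lra Lia Psatz Classical.
From Coquelicot Require Import Complex.
Open Scope R_scope.

Inductive pe : Type := PX | PC (q : Q) | PAdd (a b : pe) | PMul (a b : pe).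

Fixpoint evC (e : pe) (z : C) : C :=
  match e with
  | PX => z
  | PC q => RtoC (Q2R q)
  | PAdd a b => Cplus (evC a z) (evC b z)
  | PMul a b => Cmult (evC a z) (evC b z)
  end.

Fixpoint evR (e : pe) (x : R) : R :=
  match e with
  | PX => x
  | PC q => Q2R q
  | PAdd a b => evR a x + evR b x
  | PMul a b => evR a x * evR b x
  end.

Lemma evC_R e x : evC e (RtoC x) = RtoC (evR e x).
Proof.
  induction e; simpl; auto.
  - rewrite IHe1, IHe2, RtoC_plus; auto.
  - rewrite IHe1, IHe2, RtoC_mult; auto.
Qed.

Definition qone : Q := (1 # 1)%Q.
Definition qmone : Q := ((-1) # 1)%Q.
Lemma Q2R_one : Q2R qone = 1. Proof. unfold Q2R, qone; simpl; field. Qed.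
Lemma Q2R_mone : Q2R qmone = -1. Proof. unfold Q2R, qmone; simpl; field. Qed.
Lemma Q2R_zero : Q2R 0 = 0. Proof. unfold Q2R; simpl; field. Qed.

Definition PSub a b := PAdd a (PMul (PC qmone) b).

Lemma evC_PSub a b z : evC (PSub a b) z = Cminus (evC a z) (evC b z).
Proof.
  simpl. rewrite Q2R_mone. replace (RtoC (-1)) with (Copp (RtoC 1)) by (unfold Copp, RtoC; simpl; f_equal; ring). ring.
Qed.
Lemma evR_PSub a b z : evR (PSub a b) z = evR a z - evR b z.
Proof. simpl. rewrite Q2R_mone. ring. Qed.

Fixpoint subst (e f : pe) : pe :=
  match e with
  | PX => f
  | PC q => PC q
  | PAdd a b => PAdd (subst a f) (subst b f)
  | PMul a b => PMul (subst a f) (subst b f)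
  end.

Lemma evC_subst e f z : evC (subst e f) z = evC e (evC f z).
Proof. induction e; simpl; auto; rewrite IHe1, IHe2; auto. Qed.
Lemma evR_subst e f z : evR (subst e f) z = evR e (evR f z).
Proof. induction e; simpl; auto; rewrite IHe1, IHe2; auto. Qed.

Fixpoint split (e : pe) : pe * pe :=
  match e with
  | PX => (PC 0, PC qone)
  | PC q => (PC q, PC 0)
  | PAdd a b => (PAdd (fst (split a)) (fst (split b)), PAdd (snd (split a)) (snd (split b)))
  | PMul a b => (PAdd (PMul (fst (split a)) (fst (split b)))
                      (PMul PX (PMul (snd (split a)) (snd (split b)))),
                 PAdd (PMul (fst (split a)) (snd (split b))) (PMul (snd (split a)) (fst (split b))))
  end.

Lemma evC_split e y :
  evC e y = Cplus (evC (fst (split e)) (Cmult y y)) (Cmult y (evC (snd (split e)) (Cmult y y))).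
Proof.
  induction e; simpl.
  - rewrite Q2R_zero, Q2R_one. ring.
  - rewrite Q2R_zero. ring.
  - rewrite IHe1, IHe2. ring.
  - rewrite IHe1, IHe2. ring.
Qed.

Fixpoint cpw (c : C) (n : nat) : C :=
  match n with O => RtoC 1 | S n => Cmult c (cpw c n) end.

Lemma cpw_add c n m : cpw c (n + m) = Cmult (cpw c n) (cpw c m).
Proof. induction n; simpl. ring. rewrite IHn. ring. Qed.

Lemma C1_nz : RtoC 1 <> RtoC 0.
Proof. intro H. apply RtoC_inj in H. lra. Qed.

Lemma cpw_nz c n : c <> RtoC 0 -> cpw c n <> RtoC 0.
Proof. intro H. induction n; simpl. apply C1_nz. apply Cmult_neq_0; auto. Qed.

Fixpoint ppow (e : pe) (n : nat) : pe :=
  match n with O => PC qone | S n => PMul e (ppow e n) end.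

Lemma evC_ppow e n z : evC (ppow e n) z = cpw (evC e z) n.
Proof. induction n; simpl. rewrite Q2R_one; auto. rewrite IHn; auto. Qed.

Definition PB := PSub (PC qone) (PMul PX PX).

Fixpoint hom (e : pe) : pe * nat :=
  match e with
  | PX => (PMul PX PX, 1%nat)
  | PC q => (PC q, 0%nat)
  | PAdd a b => (PAdd (PMul (fst (hom a)) (ppow PB (snd (hom b))))
                      (PMul (fst (hom b)) (ppow PB (snd (hom a)))),
                 (snd (hom a) + snd (hom b))%nat)
  | PMul a b => (PMul (fst (hom a)) (fst (hom b)), (snd (hom a) + snd (hom b))%nat)
  end.

Lemma evC_PB z : evC PB z = Cminus (RtoC 1) (Cmult z z).
Proof. unfold PB. rewrite evC_PSub. simpl. rewrite Q2R_one. auto. Qed.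

Lemma evC_hom e z w :
  Cmult w (Cminus (RtoC 1) (Cmult z z)) = Cmult z z ->
  Cmult (evC e w) (cpw (Cminus (RtoC 1) (Cmult z z)) (snd (hom e))) = evC (fst (hom e)) z.
Proof.
  intro H. induction e; simpl.
  - transitivity (Cmult w (Cminus (RtoC 1) (Cmult z z))); [ring | exact H].
  - ring.
  - rewrite !evC_ppow, evC_PB, <- IHe1, <- IHe2, cpw_add. ring.
  - rewrite <- IHe1, <- IHe2, cpw_add. ring.
Qed.

Definition Rt (e : pe) : pe :=
  PSub (PMul (fst (split e)) (fst (split e))) (PMul PX (PMul (snd (split e)) (snd (split e)))).

Lemma evC_Rt e y : evC (Rt e) (Cmult y y) = Cmult (evC e y) (evC e (Copp y)).
Proof.
  unfold Rt. rewrite evC_PSub. simpl.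
  rewrite (evC_split e y), (evC_split e (Copp y)).
  replace (Cmult (Copp y) (Copp y)) with (Cmult y y) by ring. ring.
Qed.

Definition Vt (e : pe) : pe := fst (hom (Rt e)).
Definition Ht (e : pe) : pe := subst e (PSub PX (PC qone)).

Definition good (e : pe) : Prop := forall z, evC e z = RtoC 0 -> Im z = 0.
Lemma csqrt_ex (p q : R) : exists a b, a * a - b * b = p /\ 2 * a * b = q.
Proof.
  set (m := sqrt (p * p + q * q)).
  assert (Hm0 : 0 <= m) by apply sqrt_pos.
  assert (Hm2 : m * m = p * p + q * q) by (apply sqrt_sqrt; nra).
  assert (Hmp : 0 <= m + p) by nra.
  assert (Hmm : 0 <= m - p) by nra.
  set (a := sqrt ((m + p) / 2)).
  set (b' := sqrt ((m - p) / 2)).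
  assert (Ha : a * a = (m + p) / 2) by (apply sqrt_sqrt; lra).
  assert (Hb : b' * b' = (m - p) / 2) by (apply sqrt_sqrt; lra).
  assert (Ha0 : 0 <= a) by apply sqrt_pos.
  assert (Hb0 : 0 <= b' ) by apply sqrt_pos.
  assert (Hab : (a * b') * (a * b') = (q / 2) * (q / 2)).
  { replace ((a * b') * (a * b')) with ((a * a) * (b' * b')) by ring.
    rewrite Ha, Hb. field_simplify. nra. }
  destruct (Rle_or_lt 0 q) as [Hq|Hq].
  - exists a, b'. split. nra.
    assert (a * b' = q / 2).
    { assert (0 <= a * b') by nra.
      nra. }
    lra.
  - exists a, (- b'). split. nra.
    assert (a * b' = - (q / 2)).
    { assert (0 <= a * b') by nra. nra. }
    lra.
Qed.

Lemma csqrt (w : C) : exists y, Cmult y y = w.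
Proof.
  destruct w as [p q]. destruct (csqrt_ex p q) as [a [b [H1 H2]]].
  exists (a, b). unfold Cmult; simpl. f_equal; lra.
Qed.

Lemma Cmult_eq0 a b : Cmult a b = RtoC 0 -> a = RtoC 0 \/ b = RtoC 0.
Proof.
  intro H. destruct (classic (a = RtoC 0)); auto.
  destruct (classic (b = RtoC 0)); auto.
  exfalso. apply (Cmult_neq_0 a b); auto.
Qed.

Lemma good_Ht e : good e -> good (Ht e).
Proof.
  intros He z Hz. unfold Ht in Hz. rewrite evC_subst, evC_PSub in Hz. simpl in Hz.
  apply He in Hz. destruct z as [a b]. rewrite Q2R_one in Hz. simpl in Hz |- *. lra.
Qed.

Lemma Vt_roots e : good e -> forall z, evC (Vt e) z = RtoC 0 -> Im z = 0 /\ Re z * Re z <= 1.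
Proof.
  intros He z Hz.
  destruct (classic (Cminus (RtoC 1) (Cmult z z) = RtoC 0)) as [Hb|Hb].
  - destruct z as [a b]. unfold Cminus, Cmult, Cplus, Copp, RtoC in Hb; simpl in Hb.
    injection Hb; intros H1 H2. simpl.
    assert (b = 0) by nra. subst b. split; nra.
  - set (w := Cdiv (Cmult z z) (Cminus (RtoC 1) (Cmult z z))).
    assert (Hw : Cmult w (Cminus (RtoC 1) (Cmult z z)) = Cmult z z).
    { unfold w. field. auto. }
    pose proof (evC_hom (Rt e) z w Hw) as Hh.
    unfold Vt in Hz. rewrite Hz in Hh.
    apply Cmult_eq0 in Hh. destruct Hh as [Hh|Hh].
    2:{ exfalso. apply (cpw_nz _ _ Hb Hh). }
    destruct (csqrt w) as [y Hy].
    rewrite <- Hy in Hh. rewrite evC_Rt in Hh.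
    assert (Hiy : Im y = 0).
    { apply Cmult_eq0 in Hh. destruct Hh as [Hh|Hh].
      - apply He; auto.
      - apply He in Hh. destruct y; simpl in *. lra. }
    destruct y as [c d]. simpl in Hiy. subst d.
    rewrite <- Hy in Hw.
    destruct z as [a b]. unfold Cminus, Cmult, Cplus, Copp, RtoC in Hw; simpl in Hw.
    injection Hw; intros H1 H2. simpl.
    assert (Ht0 : 0 <= c * c) by nra.
    assert (Hab : a * b = 0) by nra.
    assert (b = 0).
    { destruct (Req_dec a 0) as [Ha|Ha].
      - subst a. nra.
      - assert (b = 0) by (apply (Rmult_eq_reg_l a); [lra|auto]). auto. }
    subst b. split; [reflexivity|]. nra.
Qed.
Lemma Vt_real e x y : 0 < x -> 0 < y -> evR e (x / sqrt y) = 0 ->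
  evR (Vt e) (x / sqrt (x * x + y)) = 0.
Proof.
  intros Hx Hy He.
  set (u := x / sqrt y). set (u' := x / sqrt (x * x + y)).
  assert (Hs1 : sqrt y * sqrt y = y) by (apply sqrt_sqrt; lra).
  assert (Hs2 : sqrt (x*x+y) * sqrt (x*x+y) = x*x+y) by (apply sqrt_sqrt; nra).
  assert (P1 : 0 < sqrt y) by (apply sqrt_lt_R0; lra).
  assert (P2 : 0 < sqrt (x*x+y)) by (apply sqrt_lt_R0; nra).
  assert (Huu : u * u = x * x / y).
  { unfold u. transitivity (x*x/(sqrt y * sqrt y)); [field; lra | rewrite Hs1; auto]. }
  assert (Hu'u' : u' * u' = x * x / (x * x + y)).
  { unfold u'. transitivity (x*x/(sqrt (x*x+y) * sqrt (x*x+y))); [field; lra | rewrite Hs2; auto]. }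
  assert (Hw : u * u * (1 - u' * u') = u' * u').
  { rewrite Huu, Hu'u'. field. split; nra. }
  assert (HwC : Cmult (RtoC (u*u)) (Cminus (RtoC 1) (Cmult (RtoC u') (RtoC u'))) = Cmult (RtoC u') (RtoC u')).
  { rewrite <- !RtoC_mult. unfold Cminus. rewrite <- RtoC_opp, <- RtoC_plus, <- RtoC_mult.
    f_equal. lra. }
  pose proof (evC_hom (Rt e) (RtoC u') (RtoC (u*u)) HwC) as Hh.
  rewrite RtoC_mult in Hh. rewrite evC_Rt in Hh.
  rewrite evC_R in Hh. unfold u in Hh. rewrite He in Hh.
  fold (Vt e) in Hh. rewrite evC_R in Hh.
  apply RtoC_inj. rewrite <- Hh. ring.
Qed.

Lemma Ht_real e x : evR (Ht e) (x + 1) = evR e x.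
Proof. unfold Ht. rewrite evR_subst, evR_PSub. simpl. rewrite Q2R_one. f_equal. ring. Qed.

Lemma conj_ev e (al be q : Q) (s : R) : s * s = Q2R q ->
  exists A B : Q, evR e (Q2R al + Q2R be * s) = Q2R A + Q2R B * s /\
                  evR e (Q2R al - Q2R be * s) = Q2R A - Q2R B * s.
Proof.
  intro Hs. induction e; simpl.
  - exists al, be. auto.
  - exists q0, 0%Q. rewrite Q2R_zero. split; ring.
  - destruct IHe1 as [A1 [B1 [H1 H2]]]. destruct IHe2 as [A2 [B2 [H3 H4]]].
    exists (A1 + A2)%Q, (B1 + B2)%Q. rewrite H1, H2, H3, H4, !Q2R_plus. split; ring.
  - destruct IHe1 as [A1 [B1 [H1 H2]]]. destruct IHe2 as [A2 [B2 [H3 H4]]].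
    exists (A1 * A2 + B1 * B2 * q)%Q, (A1 * B2 + B1 * A2)%Q.
    rewrite H1, H2, H3, H4, !Q2R_plus, !Q2R_mult. rewrite <- Hs. split; ring.
Qed.

Lemma sgn_pos x : 0 < x -> sgn x = 1.
Proof. intro. unfold sgn. destruct (Rlt_dec 0 x); [auto|lra]. Qed.
Lemma sgn_neg x : x < 0 -> sgn x = -1.
Proof. intro. unfold sgn. destruct (Rlt_dec 0 x); [lra|]. destruct (Rlt_dec x 0); [auto|lra]. Qed.
Lemma sgn_0 : sgn 0 = 0.
Proof. unfold sgn. destruct (Rlt_dec 0 0); [lra|]. destruct (Rlt_dec 0 0); [lra|auto]. Qed.

Lemma sigma_inv_nonneg y : 0 <= y -> 0 <= sigma_inv y.
Proof.
  intro. unfold sigma_inv. destruct (Req_dec y 0). subst; rewrite sgn_0; lra.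
  rewrite sgn_pos by lra. pose proof (sqrt_pos (Rabs y)). lra.
Qed.
Lemma sigma_inv_nonpos y : y <= 0 -> sigma_inv y <= 0.
Proof.
  intro. unfold sigma_inv. destruct (Req_dec y 0). subst; rewrite sgn_0; lra.
  rewrite sgn_neg by lra. pose proof (sqrt_pos (Rabs y)). lra.
Qed.
Lemma sigma_nonneg x : 0 <= x -> 0 <= Defs.sigma x.
Proof.
  intro. unfold Defs.sigma. destruct (Req_dec x 0). subst; rewrite sgn_0; lra.
  rewrite sgn_pos by lra. nra.
Qed.
Lemma sigma_nonpos x : x <= 0 -> Defs.sigma x <= 0.
Proof.
  intro. unfold Defs.sigma. destruct (Req_dec x 0). subst; rewrite sgn_0; lra.
  rewrite sgn_neg by lra. nra.
Qed.
Lemma sigma_inv_pos y : 0 < y -> sigma_inv y = sqrt y.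
Proof. intro. unfold sigma_inv. rewrite sgn_pos, Rabs_pos_eq; lra. Qed.
Lemma sigma_pos x : 0 < x -> Defs.sigma x = x * x.
Proof. intro. unfold Defs.sigma. rewrite sgn_pos; [ring|lra]. Qed.
Lemma sigma_inv_0 : sigma_inv 0 = 0.
Proof. unfold sigma_inv. rewrite sgn_0. ring. Qed.
Lemma sigma_0 : Defs.sigma 0 = 0.
Proof. unfold Defs.sigma. rewrite sgn_0. ring. Qed.

Lemma word_inv (P : R * R -> Prop) f g : (forall p, P p -> P (f p)) -> (forall p, P p -> P (g p)) ->
  forall w q, P q -> P (word_map f g w q).
Proof.
  intros Hf Hg w. induction w as [|b w IH]; intros q Hq; simpl; auto.
  destruct b; auto.
Qed.

Definition J (p : R * R) := fst p <= 0 /\ snd p <= 0.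
Definition K (p : R * R) := fst p <= 0 /\ 0 <= snd p.
Definition L (p : R * R) := 0 <= fst p /\ snd p <= 0.

Lemma J_h p : J p -> J (h_sigma p).
Proof. destruct p as [x y]; unfold J, h_sigma; simpl. intros [H1 H2]. pose proof (sigma_inv_nonpos y H2). lra. Qed.
Lemma J_v p : J p -> J (v_sigma p).
Proof. destruct p as [x y]; unfold J, v_sigma; simpl. intros [H1 H2]. pose proof (sigma_nonpos x H1). lra. Qed.
Lemma K_h p : K p -> K (h_sigma_inv p).
Proof. destruct p as [x y]; unfold K, h_sigma_inv; simpl. intros [H1 H2]. pose proof (sigma_inv_nonneg y H2). lra. Qed.
Lemma K_v p : K p -> K (v_sigma_inv p).
Proof. destruct p as [x y]; unfold K, v_sigma_inv; simpl. intros [H1 H2]. pose proof (sigma_nonpos x H1). lra. Qed.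
Lemma L_h p : L p -> L (h_sigma_inv p).
Proof. destruct p as [x y]; unfold L, h_sigma_inv; simpl. intros [H1 H2]. pose proof (sigma_inv_nonpos y H2). lra. Qed.
Lemma L_v p : L p -> L (v_sigma_inv p).
Proof. destruct p as [x y]; unfold L, v_sigma_inv; simpl. intros [H1 H2]. pose proof (sigma_nonneg x H1). lra. Qed.

Definition Inv (p : R * R) : Prop :=
  (snd p = 0 /\ 0 <= fst p) \/
  (0 < fst p /\ 0 < snd p /\ exists e, good e /\ evR e (fst p / sqrt (snd p)) = 0).

Lemma I_h p : Inv p -> Inv (h_sigma p).
Proof.
  destruct p as [x y]; unfold Inv, h_sigma; simpl.
  intros [[H1 H2]|[H1 [H2 [e [He1 He2]]]]].
  - left. subst y. rewrite sigma_inv_0. split; lra.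
  - right. rewrite sigma_inv_pos by lra.
    assert (P1 : 0 < sqrt y) by (apply sqrt_lt_R0; lra).
    split; [lra|]. split; [lra|].
    exists (Ht e). split. apply good_Ht; auto.
    replace ((x + sqrt y) / sqrt y) with (x / sqrt y + 1) by (field; lra).
    rewrite Ht_real. auto.
Qed.

Lemma good_lin : good (PSub PX (PC qone)).
Proof.
  intros z Hz. rewrite evC_PSub in Hz. simpl in Hz. rewrite Q2R_one in Hz.
  destruct z as [a b]. unfold Cminus, Cplus, Copp, RtoC in Hz. simpl in Hz.
  injection Hz. intros. simpl. lra.
Qed.

Lemma I_v p : Inv p -> Inv (v_sigma p).
Proof.
  destruct p as [x y]; unfold Inv, v_sigma; simpl.
  intros [[H1 H2]|[H1 [H2 [e [He1 He2]]]]].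
  - subst y. destruct (Req_dec x 0).
    + subst x. left. rewrite sigma_0. split; lra.
    + right. rewrite sigma_pos by lra. split; [lra|]. split; [nra|].
      exists (PSub PX (PC qone)). split. apply good_lin.
      rewrite Rplus_0_r, sqrt_square by lra.
      rewrite evR_PSub. simpl. rewrite Q2R_one. field. lra.
  - right. rewrite sigma_pos by lra. split; [lra|]. split; [nra|].
    exists (Vt e). split.
    + intros z Hz. apply (Vt_roots e He1 z Hz).
    + apply Vt_real; auto.
Qed.
Lemma no_sqrt2_Z : forall m : nat, forall n d : Z, (Z.abs d < Z.of_nat m)%Z -> d <> 0%Z -> (n * n = 2 * d * d)%Z -> False.
Proof.
  induction m; intros n d Hm Hd H.
  - lia.
  - destruct (Z.Even_or_Odd n) as [[k Hk]|[k Hk]]; subst n.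
    + destruct (Z.Even_or_Odd d) as [[j Hj]|[j Hj]]; subst d.
      * apply (IHm k j); lia.
      * nia.
    + nia.
Qed.

Lemma no_sqrt2 : ~ (exists r : Q, Q2R r * Q2R r = 2).
Proof.
  intros [[n d] H]. unfold Q2R in H. simpl in H.
  assert (Hd : IZR (Z.pos d) <> 0) by (apply not_0_IZR; lia).
  assert (H2 : IZR n * IZR n = 2 * IZR (Z.pos d) * IZR (Z.pos d)).
  { transitivity ((IZR n * / IZR (Z.pos d)) * (IZR n * / IZR (Z.pos d)) * (IZR (Z.pos d) * IZR (Z.pos d))).
    field; auto. rewrite H. ring. }
  rewrite <- !mult_IZR in H2. apply eq_IZR in H2.
  apply (no_sqrt2_Z (S (Z.to_nat (Z.abs (Z.pos d)))) n (Z.pos d)); lia.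
Qed.

Theorem part1 :
  forall x0 y0 : R, 0 < x0 -> 0 < y0 ->
    (exists q : Q, y0 = Q2R q /\ ~ (exists r : Q, Q2R r * Q2R r = y0)) ->
    (exists a0 b0 : Q, x0 = Q2R a0 + Q2R b0 * sqrt y0 /\
                       Q2R a0 <> 0 /\ 1 <= Rabs (Q2R b0)) ->
    y0 > x0 ^ 2 ->
    sigma_irrational (x0, y0).
Proof.
  intros x0 y0 hx hy [q [Hq Hns]] [a [b [Hx [Ha Hb]]]] Hlt.
  simpl in Hlt. rewrite Rmult_1_r in Hlt.
  set (s := sqrt y0).
  assert (Hs : s * s = y0) by (apply sqrt_sqrt; lra).
  assert (Hs0 : 0 < s) by (apply sqrt_lt_R0; lra).
  assert (Hxs : x0 < s).
  { unfold s. rewrite <- (sqrt_square x0) by lra. apply sqrt_lt_1; nra. }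
  unfold sigma_irrational, on_sigma_rational_line, Ox, Oy; simpl.
  intros [H|[H|[H|H]]].
  - lra.
  - lra.
  - destruct H as [w [q' [Hq' Hp]]].
    destruct (Rle_or_lt 0 (fst q')) as [Hf|Hf].
    + destruct w as [|bb w']. { simpl in Hp. rewrite <- Hp in Hq'. simpl in Hq'. lra. }
      assert (HI : Inv (word_map h_sigma v_sigma w' q')).
      { apply word_inv. apply I_h. apply I_v. left. split; auto. }
      simpl in Hp. destruct (word_map h_sigma v_sigma w' q') as [x' y'].
      destruct bb.
      * unfold h_sigma in Hp; simpl in Hp. injection Hp; intros E1 E2.
        subst y'. rewrite sigma_inv_pos in E2 by lra. fold s in E2.
        destruct HI as [[H1 H2]|[H1 [H2 _]]]; simpl in *; lra.
      * unfold v_sigma in Hp; simpl in Hp. injection Hp; intros E1 E2.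
        subst x'.
        destruct HI as [[H1 H2]|[H1 [H2 [e [He1 He2]]]]]; simpl in *.
        { subst y'. rewrite sigma_pos in E1 by lra. lra. }
        rewrite sigma_pos in E1 by lra.
        pose proof (Vt_real e x0 y' hx H2 He2) as HV.
        replace (x0 * x0 + y') with y0 in HV by lra. fold s in HV.
        assert (Hq0 : ~ (q == 0)%Q).
        { intro Hq0. apply Qeq_eqR in Hq0. rewrite Q2R_zero in Hq0. lra. }
        assert (Hu : x0 / s = Q2R b + Q2R (a / q) * s).
        { rewrite Q2R_div by auto. rewrite <- Hq, Hx. fold s. rewrite <- Hs. field. lra. }
        rewrite Hu in HV.
        destruct (conj_ev (Vt e) b (a / q) q s) as [A [B [C1 C2]]]. rewrite Hs; auto.
        rewrite C1 in HV.
        assert (HB : Q2R B = 0).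
        { destruct (Req_dec (Q2R B) 0) as [HB|HB]; auto. exfalso. apply Hns.
          assert (HB' : ~ (B == 0)%Q).
          { intro HB'. apply Qeq_eqR in HB'. rewrite Q2R_zero in HB'. auto. }
          exists (- A / B)%Q. rewrite Q2R_div by auto. rewrite Q2R_opp.
          assert (s = - Q2R A / Q2R B).
          { transitivity ((Q2R A + Q2R B * s - Q2R A)/Q2R B). field; auto. rewrite HV. field; auto. }
          rewrite <- H, Hs. auto. }
        rewrite HB in HV, C2.
        assert (HA : Q2R A = 0) by lra.
        rewrite HA in C2.
        set (u' := Q2R b - Q2R (a / q) * s) in C2.
        assert (Hr : evC (Vt e) (RtoC u') = RtoC 0).
        { rewrite evC_R. f_equal. rewrite C2. ring. }
        destruct (Vt_roots e He1 _ Hr) as [_ Hle]. simpl in Hle.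
        assert (Hu0 : 0 < x0 / s < 1).
        { split. apply Rdiv_lt_0_compat; lra. apply (Rmult_lt_reg_r s); auto.
          field_simplify; lra. }
        assert (Hu' : u' = 2 * Q2R b - x0 / s) by (unfold u'; rewrite Hu; ring).
        rewrite Hu' in Hle.
        unfold Rabs in Hb. destruct (Rcase_abs (Q2R b)); nra.
    + assert (HJ : J (word_map h_sigma v_sigma w q')).
      { apply word_inv. apply J_h. apply J_v. unfold J. lra. }
      rewrite <- Hp in HJ. unfold J in HJ. simpl in HJ. lra.
  - destruct H as [w [q' [Hq' Hp]]].
    destruct (Rle_or_lt 0 (snd q')) as [Hf|Hf].
    + assert (HK : K (word_map h_sigma_inv v_sigma_inv w q')).
      { apply word_inv. apply K_h. apply K_v. unfold K. lra. }
      rewrite <- Hp in HK. unfold K in HK. simpl in HK. lra.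
    + assert (HL : L (word_map h_sigma_inv v_sigma_inv w q')).
      { apply word_inv. apply L_h. apply L_v. unfold L. lra. }
      rewrite <- Hp in HL. unfold L in HL. simpl in HL. lra.
Qed.

Theorem lemma7 :
  (forall x0 y0 : R, 0 < x0 -> 0 < y0 ->
    (exists q : Q, y0 = Q2R q /\ ~ (exists r : Q, Q2R r * Q2R r = y0)) ->
    (exists a0 b0 : Q, x0 = Q2R a0 + Q2R b0 * sqrt y0 /\
                       Q2R a0 <> 0 /\ 1 <= Rabs (Q2R b0)) ->
    y0 > x0 ^ 2 ->
    sigma_irrational (x0, y0))
  /\ sigma_irrational (-1 + sqrt 2, 2).
Proof.
  split. exact part1.
  assert (H2 : 1 < sqrt 2).
  { rewrite <- sqrt_1. apply sqrt_lt_1; lra. }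
  assert (Hs : sqrt 2 * sqrt 2 = 2) by (apply sqrt_sqrt; lra).
  apply part1.
  - lra.
  - lra.
  - exists (2 # 1)%Q. split. unfold Q2R; simpl; field. apply no_sqrt2.
  - exists qmone, qone. rewrite Q2R_mone, Q2R_one. split. ring. split. lra.
    rewrite Rabs_pos_eq; lra.
  - simpl. nra.
Qed.
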